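(* Let $2\le n\le6$ and $0<\lambda<1$. For $f:[0,\pi/2]\to(0,\infty)$ set $$S_{n,\lambda}(f)=\int_0^{\pi/2}\sqrt{(f')^2+\lambda^2f^2}\,f^{n-1}\cos^{n-1}\theta\,d\theta .$$ Consider the ODE $$\left(\frac{f'\cos^{n-1}\theta}{\sqrt{(f')^2+\lambda^2f^2}}\right)'-\frac{n\lambda^2f\cos^{n-1}\theta}{\sqrt{(f')^2+\lambda^2f^2}}=0,\qquad f(0)=1,\ f'(0)=A.$$ If for some $A$ the solution $f$ can be extended to $[0,\pi/2]$ and is a minimizer of $S_{n,\lambda}$ (among functions $g$ with $g(0)=1$), then $S_{n,\lambda}(f)<\frac1n$; consequently the totally geodesic hypercone $C(S^{n-1}(\lambda))$ is not area-minimizing in $C(S^n(\lambda))$.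
   Context: $C(S^n(\lambda))$ is the cone over the round $n$-sphere of radius $\lambda$, modelled as $\mathbb{R}^{n+1}$ with metric $dr^2+\lambda^2r^2g_{S^n}$; $C(S^{n-1}(\lambda))$ is the cone over the equator. For a rotationally symmetric hypersurface given in polar coordinates by $r=f(\theta)$, $\theta\in[0,\pi/2]$ the polar angle from the equatorial hyperplane, its area is $n\omega_n\lambda^{n-1}S_{n,\lambda}(f)$, while the truncated cone $C(S^{n-1}(\lambda))\cap\{r\le1\}$ has area $\omega_n\lambda^{n-1}$; the ODE is the Euler–Lagrange equation of $S_{n,\lambda}$. *)

(* Defs.v *)
From Stdlib Require Import Reals.
From Coquelicot Require Import Coquelicot.
Open Scope R_scope.

Definition S_integrand (n : nat) (lam : R) (f : R -> R) (t : R) : R :=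
  sqrt ((Derive f t) ^ 2 + lam ^ 2 * (f t) ^ 2) * (f t) ^ (n - 1) * (cos t) ^ (n - 1).

Definition S_nl (n : nat) (lam : R) (f : R -> R) : R :=
  RInt (S_integrand n lam f) 0 (PI / 2).

Definition admissible (g : R -> R) : Prop :=
  forall t, 0 <= t <= PI / 2 ->
    0 < g t /\ ex_derive g t /\ continuous (Derive g) t.

Definition flux (n : nat) (lam : R) (f : R -> R) (t : R) : R :=
  Derive f t * (cos t) ^ (n - 1) / sqrt ((Derive f t) ^ 2 + lam ^ 2 * (f t) ^ 2).

Definition solves_EL (n : nat) (lam A : R) (f : R -> R) : Prop :=
  f 0 = 1 /\ Derive f 0 = A /\
  forall t, 0 <= t < PI / 2 ->
    is_derive (flux n lam f) t
      (INR n * lam ^ 2 * f t * (cos t) ^ (n - 1)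
         / sqrt ((Derive f t) ^ 2 + lam ^ 2 * (f t) ^ 2)).

(* Main.v *)
Require Import Defs.
From Stdlib Require Import Reals Lra Lia.
From Coquelicot Require Import Coquelicot.
Open Scope R_scope.

Lemma cont_pow (g : R -> R) (k : nat) (x : R) :
  continuous g x -> continuous (fun t => g t ^ k) x.
Proof.
  intros Hg; induction k as [|k IH]; simpl.
  - apply continuous_const.
  - apply (continuous_mult g (fun t => g t ^ k)); auto.
Qed.

Lemma cont_sqrt (g : R -> R) (x : R) :
  continuous g x -> 0 <= g x -> continuous (fun t => sqrt (g t)) x.
Proof.
  intros Hg H0. apply (continuous_comp g sqrt); auto.
  apply continuity_pt_filterlim. now apply continuity_pt_sqrt.
Qed.

Theorem lemma5p5 (n : nat) (lam A : R) (f : R -> R) :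
  (2 <= n <= 6)%nat -> 0 < lam < 1 ->
  admissible f -> solves_EL n lam A f ->
  (forall g : R -> R, admissible g -> g 0 = 1 -> S_nl n lam f <= S_nl n lam g) ->
  S_nl n lam f < 1 / INR n.
Proof.
  intros Hn Hlam Hadm [Hf0 [HA EL]] _.
  destruct n as [|m]; [lia|].
  assert (Hm : (1 <= m)%nat) by lia.
  unfold S_nl.
  set (h := S_integrand (S m) lam f).
  set (W := fun t => sqrt (Derive f t ^ 2 + lam ^ 2 * f t ^ 2)).
  assert (Hpos : forall t, 0 <= t <= PI/2 -> 0 < Derive f t ^ 2 + lam ^ 2 * f t ^ 2).
  { intros t Ht. destruct (Hadm t Ht) as [Hft _].
    assert (0 <= Derive f t ^ 2) by (apply pow2_ge_0).
    assert (0 < lam ^ 2 * f t ^ 2) by (apply Rmult_lt_0_compat; apply pow_lt; lra).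
    lra. }
  assert (HWpos : forall t, 0 <= t <= PI/2 -> 0 < W t).
  { intros t Ht. unfold W. apply sqrt_lt_R0. now apply Hpos. }
  assert (Hfc : forall t, 0 <= t <= PI/2 -> continuous f t).
  { intros t Ht. apply (@ex_derive_continuous R_AbsRing R_NormedModule). apply (Hadm t Ht). }
  assert (HWc : forall t, 0 <= t <= PI/2 -> continuous W t).
  { intros t Ht. unfold W. apply cont_sqrt; [| left; now apply Hpos].
    apply (continuous_plus (fun t => Derive f t ^ 2) (fun t => lam ^ 2 * f t ^ 2)).
    - apply cont_pow. apply (Hadm t Ht).
    - apply (continuous_mult (fun _ => lam ^ 2) (fun t => f t ^ 2)).
      + apply continuous_const.
      + apply cont_pow, Hfc, Ht. }
  assert (Hhc : forall t, 0 <= t <= PI/2 -> continuous h t).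
  { intros t Ht. unfold h, S_integrand.
    apply (continuous_mult (fun t => sqrt (Derive f t ^ 2 + lam ^ 2 * f t ^ 2) * f t ^ (S m - 1))
                           (fun t => cos t ^ (S m - 1))).
    - apply (continuous_mult (fun t => sqrt (Derive f t ^ 2 + lam ^ 2 * f t ^ 2))
                             (fun t => f t ^ (S m - 1))).
      + apply (HWc t Ht).
      + apply cont_pow, Hfc, Ht.
    - apply cont_pow, continuous_cos. }
  set (F := fun t => / INR (S m) * (f t ^ (S m) * flux (S m) lam f t)).
  assert (HFd : forall t, 0 <= t < PI/2 -> is_derive F t (h t)).
  { intros t Ht.
    assert (Ht' : 0 <= t <= PI/2) by lra.
    assert (Hf : is_derive f t (Derive f t)) by (apply Derive_correct, (Hadm t Ht')).
    pose proof (is_derive_pow f (S m) t _ Hf) as Hp.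
    pose proof (EL t Ht) as Hfl.
    pose proof (is_derive_mult _ _ _ _ _ Hp Hfl (fun a b => Rmult_comm a b)) as Hmu.
    pose proof (is_derive_scal _ _ (/ INR (S m)) _ Hmu) as Hs.
    unfold F. 
    match type of Hs with is_derive _ _ ?v => replace (h t) with v; [exact Hs|] end.
    unfold h, S_integrand, flux.
    replace (S m - 1)%nat with m by lia.
    change (pred (S m)) with m.
    unfold plus, mult; cbn -[INR pow sqrt Rdiv Rinv Derive cos].
    fold (W t).
    assert (HW : Derive f t ^ 2 + lam ^ 2 * f t ^ 2 = W t * W t).
    { unfold W. rewrite sqrt_sqrt; [reflexivity|]. left; now apply Hpos. }
    pose proof (HWpos t Ht').
    assert (INR (S m) <> 0) by (apply not_0_INR; lia).
    transitivity (f t ^ m * cos t ^ m * (Derive f t ^ 2 + lam ^ 2 * f t ^ 2) / W t).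
    - simpl pow. field. lra.
    - rewrite HW. field. lra. }
  assert (Hex : forall a b, 0 <= a -> a <= b -> b <= PI/2 -> ex_RInt h a b).
  { intros a b Ha Hab Hb. apply (@ex_RInt_continuous R_CompleteNormedModule). intros z Hz.
    rewrite Rmin_left in Hz by lra. rewrite Rmax_right in Hz by lra.
    apply Hhc; lra. }
  assert (HPI : 0 < PI / 2) by (pose proof PI_RGT_0; lra).
  assert (HFI : forall b, 0 <= b < PI/2 -> RInt h 0 b = F b - F 0).
  { intros b Hb. apply (@is_RInt_unique R_CompleteNormedModule).
    apply (@is_RInt_derive R_CompleteNormedModule F h 0 b).
    - intros x Hx. rewrite Rmin_left in Hx by lra. rewrite Rmax_right in Hx by lra.
      apply HFd; lra.
    - intros x Hx. rewrite Rmin_left in Hx by lra. rewrite Rmax_right in Hx by lra.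
      apply Hhc; lra. }
  assert (HFc : continuous F (PI/2)).
  { unfold F, flux.
    apply (continuous_mult (fun _ => / INR (S m))); [apply continuous_const|].
    assert (Hp : 0 <= PI/2 <= PI/2) by lra.
    apply (continuous_mult (fun t => f t ^ S m)).
    - apply cont_pow, Hfc, Hp.
    - apply (continuous_mult (fun t => Derive f t * cos t ^ (S m - 1))).
      + apply (continuous_mult (Derive f)). apply (Hadm _ Hp).
        apply cont_pow, continuous_cos.
      + apply (continuous_Rinv_comp W). apply HWc, Hp.
        pose proof (HWpos _ Hp); lra. }
  assert (HFpi : F (PI/2) = 0).
  { unfold F, flux. rewrite cos_PI2. replace (S m - 1)%nat with m by lia.
    rewrite pow_i by lia. unfold Rdiv. ring. }
  set (W0 := sqrt (A ^ 2 + lam ^ 2)).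
  assert (HAW : 0 < A + W0).
  { assert (Rabs A < W0).
    { unfold W0. rewrite <- sqrt_Rsqr_abs. apply sqrt_lt_1_alt. split.
      apply Rle_0_sqr. unfold Rsqr. simpl. assert (0 < lam * (lam * 1)) by nra. nra. }
    pose proof (Rle_abs (-A)). rewrite Rabs_Ropp in *. lra. }
  assert (HW0 : 0 < W0).
  { unfold W0. apply sqrt_lt_R0. assert (0 < lam^2) by (apply pow_lt; lra).
    assert (0 <= A^2) by apply pow2_ge_0. lra. }
  assert (HnR : 0 < INR (S m)) by (apply lt_0_INR; lia).
  assert (HF0 : F 0 = / INR (S m) * (A / W0)).
  { unfold F, flux, W0. rewrite cos_0, Hf0, HA, !pow1. replace (lam ^ 2 * 1) with (lam ^ 2) by ring. fold W0. field. split; lra. }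
  set (gap := 1 / INR (S m) + F 0).
  assert (Hgap : 0 < gap).
  { unfold gap. rewrite HF0.
    replace (1 / INR (S m) + / INR (S m) * (A / W0)) with ((A + W0) / (INR (S m) * W0)) by (field; lra).
    apply Rdiv_lt_0_compat; [lra| nra]. }
  destruct (continuity_ab_maj (fun t => Rabs (h t)) 0 (PI/2)) as [Mx [HM HMx]]; [lra| |].
  { intros c Hc. apply continuity_pt_filterlim.
    apply (continuous_comp h Rabs). apply Hhc; lra.
    apply continuity_pt_filterlim. apply Rcontinuity_abs. }
  set (M := Rabs (h Mx)).
  assert (HM0 : 0 <= M) by apply Rabs_pos.
  apply continuity_pt_filterlim in HFc.
  destruct (HFc (gap/2)) as [alp [Halp Hal]]; [lra|].
  set (d := Rmin alp (Rmin (PI/2) (gap / (M+1)))).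
  assert (Hd1 : d <= alp) by apply Rmin_l.
  assert (Hd2 : d <= PI/2) by (unfold d; eapply Rle_trans; [apply Rmin_r| apply Rmin_l]).
  assert (Hd3 : d <= gap/(M+1)) by (unfold d; eapply Rle_trans; [apply Rmin_r| apply Rmin_r]).
  assert (Hd0 : 0 < d).
  { unfold d. apply Rmin_pos; [lra|]. apply Rmin_pos; [lra|]. apply Rdiv_lt_0_compat; lra. }
  set (b := PI/2 - d/2).
  assert (Hb : 0 <= b < PI/2) by (unfold b; lra).
  assert (HFb : Rabs (F b - F (PI/2)) < gap/2).
  { apply (Hal b). split.
    - split; [exact I| unfold b; lra].
    - simpl. unfold R_dist. rewrite Rabs_left by (unfold b; lra). unfold b; lra. }
  rewrite HFpi, Rminus_0_r in HFb.
  rewrite <- (RInt_Chasles h 0 b (PI/2)) by (apply Hex; lra).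
  rewrite (HFI b Hb).
  assert (HR : Rabs (RInt h b (PI/2)) <= (PI/2 - b) * M).
  { apply abs_RInt_le_const; [lra| apply Hex; lra|]. intros t Ht. apply HM. lra. }
  assert (HdM : d * (M + 1) <= gap).
  { apply Rle_trans with (gap / (M+1) * (M+1)).
    apply Rmult_le_compat_r; lra. right. field. lra. }
  assert ((PI/2 - b) * M <= gap / 2) by (unfold b; nra).
  pose proof (Rle_abs (RInt h b (PI/2))). pose proof (Rle_abs (F b)).
  unfold gap in *. set (N := INR (S m)) in *. unfold plus; simpl. lra.
Qed.
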